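(* Let $d\ge 2$, let $\bm{k}_1,\ldots,\bm{k}_d\in\mathbb{R}^d$ be a basis of $\mathbb{R}^d$ with $\mathsf{K}=[\bm{k}_1,\ldots,\bm{k}_d]$, and let $\mathfrak{a},\mathfrak{b}\in\mathbb{R}$. For $\bm{u}=[\alpha_1,\ldots,\alpha_d,\beta_1,\ldots,\beta_d]^T\in\mathbb{C}^{2d}$ and $\bm{x}\in\mathbb{R}^d$ let $p(\bm{x};\bm{u})=\sum_{j=1}^d\alpha_j e^{i\bm{k}_j\cdot\bm{x}}+\beta_j e^{-i\bm{k}_j\cdot\bm{x}}$, $\psi(\bm{x};\bm{u})=\mathfrak{a}|p(\bm{x};\bm{u})|^2-\mathfrak{b}|\nabla_{\bm{x}}p(\bm{x};\bm{u})|^2$, and let $\mathsf{Q}(\bm{0})$ be the Hermitian matrix with $\psi(\bm{0};\bm{u})=\bm{u}^*\mathsf{Q}(\bm{0})\bm{u}$. Fix a sign $\pm$ (with $\mp$ denoting the opposite sign), and let $\bm{u}=[\bm{v};\pm\bm{v}]$, $\bm{v}\in\mathbb{R}^d$, be a real unit-norm eigenvector of $\mathsf{Q}(\bm{0})$ with eigenvalue $\lambda$. Let $R^\pm_{\lambda,\bm{u}}$ be the set of pairs $(\bm{s},\bm{r})\in\{0,1\}^d\times\{0,1\}^d$ such that the three vectors $$[(-1)^{\bm{s}}\odot\bm{v};\mp(-1)^{\bm{s}}\odot\bm{v}],\quad [(-1)^{\bm{r}}\odot\bm{v};\mp(-1)^{\bm{r}}\odot\bm{v}],\quad [(-1)^{\bm{s}+\bm{r}}\odot\bm{v};\pm(-1)^{\bm{s}+\bm{r}}\odot\bm{v}]$$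 all lie in the $\lambda$-eigenspace of $\mathsf{Q}(\bm{0})$. Then for every $\bm{n}\in\mathbb{Z}^d$ and every $(\bm{s},\bm{r})\in R^\pm_{\lambda,\bm{u}}$, the set $L_{\lambda,\bm{u}}=\{\bm{x}\in\mathbb{R}^d:\psi(\bm{x};\bm{u})=\lambda\}$ contains $$\{\mathsf{K}^{-T}(\theta(-1)^{\bm{s}}+\phi(-1)^{\bm{r}}+2\pi\bm{n}):\theta,\phi\in\mathbb{R}\}.$$ Moreover, this set is a plane whenever $(-1)^{\bm{s}}$ and $(-1)^{\bm{r}}$ are linearly independent, equivalently whenever $(-1)^{\bm{s}+\bm{r}}\notin\{-\bm{1},\bm{1}\}$.
   Context: $[\bm{x};\bm{y}]$ denotes the vertical stacking of vectors $\bm{x},\bm{y}$. For $\bm{s}\in\{0,1\}^d$ (or $\bm{s}\in\{0,1,2\}^d$ for sums), $(-1)^{\bm{s}}=[(-1)^{s_1},\ldots,(-1)^{s_d}]$; $\bm{1}$ is the all-ones vector in $\mathbb{R}^d$; and $\odot$ is the componentwise (Hadamard) product. *)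

(* Defs.v *)
From HB Require Import structures.
From mathcomp Require Import all_boot all_order all_algebra.
From mathcomp Require Import all_classical all_reals all_analysis.
From mathcomp Require Import complex.
Set Implicit Arguments. Unset Strict Implicit. Unset Printing Implicit Defensive.
Import Order.TTheory GRing.Theory Num.Theory.
Local Open Scope ring_scope.
Local Open Scope complex_scope.
Local Open Scope classical_set_scope.

Section Defs.
Variables (R : realType) (d : nat).

Definition cexpi (t : R) : R[i] := (cos t) +i* (sin t).

Definition kdot (K : 'M[R]_d) (j : 'I_d) (x : 'cV[R]_d) : R :=
  \sum_(m < d) K m j * x m 0.

Definition pfun (K : 'M[R]_d) (u : 'cV[R[i]]_(d + d)) (x : 'cV[R]_d) : R[i] :=
  \sum_(j < d) (u (lshift d j) 0 * cexpi (kdot K j x)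
              + u (rshift d j) 0 * cexpi (- kdot K j x)).

Definition normsqC (z : R[i]) : R := (complex.Re z) ^+ 2 + (complex.Im z) ^+ 2.

Definition partial (f : 'cV[R]_d -> R) (m : 'I_d) (x : 'cV[R]_d) : R :=
  derive1 (fun t : R => f (x + t *: delta_mx m 0)) 0.

Definition gradsq (K : 'M[R]_d) (u : 'cV[R[i]]_(d + d)) (x : 'cV[R]_d) : R :=
  \sum_(m < d) ((partial (fun y => complex.Re (pfun K u y)) m x) ^+ 2
              + (partial (fun y => complex.Im (pfun K u y)) m x) ^+ 2).

Definition psi (a b : R) (K : 'M[R]_d) (u : 'cV[R[i]]_(d + d)) (x : 'cV[R]_d) : R :=
  a * normsqC (pfun K u x) - b * gradsq K u x.

Definition hermitian_mx n (Q : 'M[R[i]]_n) : Prop :=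
  forall i j, Q j i = (Q i j)^*.

Definition qform n (Q : 'M[R[i]]_n) (u : 'cV[R[i]]_n) : R[i] :=
  \sum_(i < n) \sum_(j < n) (u i 0)^* * Q i j * u j 0.

Definition cvec n (w : 'cV[R]_n) : 'cV[R[i]]_n := map_mx (fun x : R => x%:C) w.

Definition sgnv (s : 'I_d -> bool) : 'cV[R]_d := \col_j ((-1) ^+ s j).
Definition sgnv2 (s r : 'I_d -> bool) : 'cV[R]_d :=
  \col_j ((-1) ^+ (s j + r j)%N).

Definition hadamard (x y : 'cV[R]_d) : 'cV[R]_d := \col_j (x j 0 * y j 0).

Definition in_eigenspace n (Q : 'M[R[i]]_n) (lam : R) (w : 'cV[R[i]]_n) : Prop :=
  Q *m w = lam%:C *: w.

Definition lin_indep2 (x y : 'cV[R]_d) : Prop :=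
  forall c1 c2 : R, c1 *: x + c2 *: y = 0 -> c1 = 0 /\ c2 = 0.

Definition is_plane (S : set 'cV[R]_d) : Prop :=
  exists (x0 y1 y2 : 'cV[R]_d), lin_indep2 y1 y2 /\
    S = [set x | exists th ph : R, x = x0 + th *: y1 + ph *: y2].

Definition lineset (K : 'M[R]_d) (s r : 'I_d -> bool) (n : 'cV[int]_d) : set 'cV[R]_d :=
  [set x | exists th ph : R,
     x = (invmx K)^T *m (th *: sgnv s + ph *: sgnv r
                          + (2 * pi) *: map_mx (fun z : int => z%:~R) n)].

Definition levelset (a b : R) (K : 'M[R]_d) (u : 'cV[R[i]]_(d + d)) (lam : R)
  : set 'cV[R]_d := [set x | psi a b K u x = lam].

End Defs.
Arguments sgnv R {d} s.
Arguments sgnv2 R {d} s r.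

(* Main.v *)
Require Import Defs.
From HB Require Import structures.
From mathcomp Require Import all_boot all_order all_algebra.
From mathcomp Require Import all_classical all_reals all_analysis.
From mathcomp Require Import complex.
From mathcomp Require Import ring lra.
Import Order.TTheory GRing.Theory Num.Theory.
Local Open Scope ring_scope.
Local Open Scope complex_scope.
Local Open Scope classical_set_scope.

Set Implicit Arguments. Unset Strict Implicit.
Section H.
Variables (R : realType) (d : nat).

Lemma cexpiD (a b : R) : cexpi (a + b) = cexpi a * cexpi b.
Proof.
rewrite /cexpi cosD sinD; simpc; congr (_ +i* _); ring.
Qed.

Lemma kdotD (K : 'M[R]_d) j x y : kdot K j (x + y) = kdot K j x + kdot K j y.
Proof. by rewrite /kdot -big_split; apply: eq_bigr => m _; rewrite mxE mulrDr. Qed.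

Definition ushift (K : 'M[R]_d) (u : 'cV[R[i]]_(d + d)) (x : 'cV[R]_d) : 'cV[R[i]]_(d+d) :=
  col_mx (\col_j (u (lshift d j) 0 * cexpi (kdot K j x)))
         (\col_j (u (rshift d j) 0 * cexpi (- kdot K j x))).

Lemma pfun_shift K u x y : pfun K u (x + y) = pfun K (ushift K u x) y.
Proof.
rewrite /pfun; apply: eq_bigr => j _.
by rewrite /ushift col_mxEu col_mxEd !mxE kdotD opprD !cexpiD !mulrA.
Qed.

Lemma psi_shift a b K u x : psi a b K u x = psi a b K (ushift K u x) 0.
Proof.
rewrite /psi /gradsq.
have -> : pfun K (ushift K u x) 0 = pfun K u x by rewrite -pfun_shift addr0.
congr (_ - _ * _); apply: eq_bigr => m _; rewrite /partial.
congr (_ ^+ 2 + _ ^+ 2); congr (derive1 _ 0); apply: funext => t /=;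
  by rewrite pfun_shift add0r.
Qed.

Lemma cos_int (f : R -> R) : periodic f (pi *+ 2) ->
  forall (z : int) y, f (y + 2 * pi * z%:~R) = f y.
Proof.
move=> hf [k|k] y.
  by rewrite pmulrn mulr_natr mulr_natl (periodicn hf).
rewrite NegzE mulrNz mulrN -[in RHS](subrK (2 * pi * k.+1%:~R) y).
by rewrite pmulrn mulr_natr mulr_natl (periodicn hf).
Qed.


Lemma cexpi_int (z : int) y : cexpi (y + 2 * pi * z%:~R) = cexpi y :> R[i].
Proof. by rewrite /cexpi (@cos_int cos (@cosD2pi R)) (@cos_int sin (@sinD2pi R)). Qed.

Lemma cexpi_sg (th : R) (b : bool) :
  cexpi (th * (-1) ^+ b) = cos th +i* ((-1) ^+ b * sin th).
Proof. by case: b; rewrite /cexpi /= ?expr0 ?expr1 ?mulr1 ?mul1r ?mulrN1 ?mulN1r ?cosN ?sinN. Qed.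

Lemma cexpiN (y : R) : cexpi (- y) = cos y +i* (- sin y).
Proof. by rewrite /cexpi cosN sinN. Qed.

Lemma kdot_mx (K : 'M[R]_d) j y : kdot K j y = (K^T *m y) j 0.
Proof. by rewrite /kdot !mxE; apply: eq_bigr => m _; rewrite mxE. Qed.

Lemma normterm (a t : R) : (a%:C * cexpi t)^* * (a%:C * cexpi t) = (a ^+ 2)%:C.
Proof.
change (a%:C) with (a +i* 0); rewrite /cexpi; simpc.
apply/eqP; rewrite eq_complex /=; apply/andP; split; apply/eqP.
  by rewrite -[a ^+ 2]mulr1 -(cos2Dsin2 t); ring.
ring.
Qed.

Lemma qform_eig n (Q : 'M[R[i]]_n) lam w : in_eigenspace Q lam w ->
  qform Q w = lam%:C * \sum_i ((w i 0)^* * w i 0).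
Proof.
move=> /matrixP H; rewrite /qform mulr_sumr; apply: eq_bigr => i _.
have := H i 0; rewrite !mxE => Hi.
rewrite mulrCA -Hi mulr_sumr; apply: eq_bigr => j _; by rewrite mulrA.
Qed.

Lemma split_l (j : 'I_d) : fintype.split (lshift d j) = inl j.
Proof. exact: (unsplitK (inl j)). Qed.
Lemma split_r (j : 'I_d) : fintype.split (rshift d j) = inr j.
Proof. exact: (unsplitK (inr j)). Qed.


Lemma cexpi_intN (z : int) y : cexpi (y - 2 * pi * z%:~R) = cexpi y :> R[i].
Proof. by rewrite -mulrN -intrN cexpi_int. Qed.

Lemma cexpi_sgN (th : R) (b : bool) :
  cexpi (- (th * (-1) ^+ b)) = cos th +i* (- ((-1) ^+ b * sin th)).
Proof. by case: b; rewrite /cexpi /= ?expr0 ?expr1 ?mulr1 ?mul1r ?mulrN1 ?mulN1r ?opprK ?cosN ?sinN. Qed.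

Lemma rc (x : R) : x%:C = x +i* 0. Proof. by []. Qed.

End H.
Unset Implicit Arguments.

Theorem lemma2p9 (R : realType) (d : nat) (hd : (2 <= d)%N)
  (K : 'M[R]_d) (hK : K \in unitmx) (a b : R)
  (Q : 'M[R[i]]_(d + d)) (hQh : hermitian_mx Q)
  (hQ : forall u : 'cV[R[i]]_(d + d), (psi a b K u 0)%:C = qform Q u)
  (eps : bool) (v : 'cV[R]_d) (lam : R)
  (hunit : \sum_(j < d) v j 0 ^+ 2 + \sum_(j < d) ((-1) ^+ eps * v j 0) ^+ 2 = 1)
  (heig : in_eigenspace Q lam (cvec (col_mx v ((-1) ^+ eps *: v)))) :
  forall (n : 'cV[int]_d) (s r : 'I_d -> bool),
    in_eigenspace Q lam
      (cvec (col_mx (hadamard (sgnv R s) v) (- (-1) ^+ eps *: hadamard (sgnv R s) v))) ->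
    in_eigenspace Q lam
      (cvec (col_mx (hadamard (sgnv R r) v) (- (-1) ^+ eps *: hadamard (sgnv R r) v))) ->
    in_eigenspace Q lam
      (cvec (col_mx (hadamard (sgnv2 R s r) v) ((-1) ^+ eps *: hadamard (sgnv2 R s r) v))) ->
    lineset K s r n `<=` levelset a b K (cvec (col_mx v ((-1) ^+ eps *: v))) lam
    /\ (lin_indep2 (sgnv R s) (sgnv R r) -> is_plane (lineset K s r n))
    /\ (lin_indep2 (sgnv R s) (sgnv R r) <->
        ~ (sgnv2 R s r = const_mx 1 \/ sgnv2 R s r = const_mx (-1))).
Proof.
move=> n s r e1 e2 e3.
split; [|split].
- move=> _ [th [ph ->]]; rewrite /levelset /=.
  set W := (X in _ *m X).
  set x := (invmx K)^T *m W.
  rewrite psi_shift.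
  set u0 := cvec _.
  set uX := ushift K u0 x.
  have hk : forall j, kdot K j x = W j 0.
    by move=> j; rewrite kdot_mx /x mulmxA -trmx_mul mulVmx // trmx1 mul1mx.
  set E0 := cvec (col_mx v _) in heig.
  set E1 := cvec _ in e1.
  set E2 := cvec _ in e2.
  set E3 := cvec _ in e3.
  have dec : uX = (cos th * cos ph)%:C *: E0 + (- (sin th * sin ph))%:C *: E3
        + (0 +i* (sin th * cos ph)) *: E1 + (0 +i* (cos th * sin ph)) *: E2.
    apply/matrixP => i k; rewrite [k]ord1 -(splitK i).
    case: (fintype.split i) => j /=.
    + do 3 (rewrite ?mxE ?split_l ?split_r /=).
      rewrite hk !mxE cexpi_int !cexpiD !cexpi_sg exprD !rc.
      simpc.
      apply/eqP; rewrite eq_complex /=; apply/andP; split; apply/eqP; ring.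
    + do 3 (rewrite ?mxE ?split_l ?split_r /=).
      rewrite hk !mxE !opprD cexpi_intN !cexpiD !cexpi_sgN exprD !rc.
      simpc.
      apply/eqP; rewrite eq_complex /=; apply/andP; split; apply/eqP; ring.
  have eig : in_eigenspace Q lam uX.
    rewrite /in_eigenspace dec !mulmxDr -!scalemxAr heig e1 e2 e3.
    by rewrite !scalerDr !scalerA ![lam%:C * _]mulrC.
  have := hQ uX; rewrite (qform_eig eig).
  have -> : \sum_i ((uX i 0)^* * uX i 0) = 1.
    rewrite big_split_ord /=.
    rewrite /uX /ushift.
    under eq_bigr do rewrite mxE split_l /= !mxE split_l /= normterm.
    under [X in _ + X]eq_bigr do rewrite mxE split_r /= !mxE split_r /= !mxE normterm.
    by rewrite -!rmorph_sum -rmorphD hunit.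
  by rewrite mulr1 => /complexI.
- move=> hind.
  set M := (invmx K)^T.
  have hM : K^T *m M = 1%:M by rewrite /M -trmx_mul mulVmx // trmx1.
  exists (M *m ((2 * pi) *: map_mx (fun z : int => z%:~R) n)), (M *m sgnv R s), (M *m sgnv R r).
  split.
    move=> c1 c2 H; apply: hind.
    have := congr1 (mulmx K^T) H.
    by rewrite mulmx0 mulmxDr -!scalemxAr !mulmxA hM !mul1mx.
  rewrite /lineset; apply/seteqP; split => y [th [ph ->]]; exists th, ph;
    rewrite !mulmxDr -!scalemxAr.
    by rewrite addrC addrA.
  by rewrite -addrA addrC.
- have sE : forall (b : bool), (-1) ^+ b = (if b then -1 else 1) :> R.
    by case; rewrite ?expr0 ?expr1.
  have ht : forall j, sgnv2 R s r j 0 = (-1) ^+ s j * (-1) ^+ r j.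
    by move=> j; rewrite mxE exprD.
  split.
  + move=> hind [H|H].
    * have := hind 1 (-1).
      have -> : 1 *: sgnv R s + (-1) *: sgnv R r = 0.
        apply/matrixP => j k; rewrite [k]ord1 !mxE.
        have := congr1 (fun M : 'cV[R]_d => M j 0) H; rewrite ht !mxE !sE.
        by case: (s j); case: (r j) => /= h; lra.
      by case=> // /eqP; rewrite oner_eq0.
    * have := hind 1 1.
      have -> : 1 *: sgnv R s + 1 *: sgnv R r = 0.
        apply/matrixP => j k; rewrite [k]ord1 !mxE.
        have := congr1 (fun M : 'cV[R]_d => M j 0) H; rewrite ht !mxE !sE.
        by case: (s j); case: (r j) => /= h; lra.
      by case=> // /eqP; rewrite oner_eq0.
  + move=> hnot c1 c2 H.
    have hj : forall j, c1 + c2 * sgnv2 R s r j 0 = 0.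
      move=> j; have := congr1 (fun M : 'cV[R]_d => M j 0) H; rewrite ht !mxE !sE.
      by case: (s j); case: (r j) => /= h; lra.
    have ht2 : forall j, sgnv2 R s r j 0 = 1 \/ sgnv2 R s r j 0 = -1.
      move=> j; rewrite ht !sE.
      by case: (s j); case: (r j) => /=; first [left; lra | right; lra].
    case: (pselect (exists j, sgnv2 R s r j 0 = -1)) => [[j hj1]|hno]; last first.
      exfalso; apply: hnot; left; apply/matrixP => j k; rewrite [k]ord1 [in RHS]mxE.
      by case: (ht2 j) => // h; exfalso; apply: hno; exists j.
    case: (pselect (exists j, sgnv2 R s r j 0 = 1)) => [[k hk1]|hno]; last first.
      exfalso; apply: hnot; right; apply/matrixP => i k; rewrite [k]ord1 [in RHS]mxE.
      by case: (ht2 i) => // h; exfalso; apply: hno; exists i.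
    have := hj j; have := hj k; rewrite hj1 hk1 => h1 h2; split; lra.
Qed.
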